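(* Let $A(n)=\sum_{r=0}^n n!/r!$ for $n\ge0$ (so $A(n)/n!$ is the $n$th partial sum of $\sum_{r\ge0}1/r!$). Define $Q(0)=0$, $Q(1)=1$, $Q(n)=b(n)Q(n-1)+Q(n-2)$ for $n\ge2$, where $b(n)=2n/3$ if $3\mid n$ and $b(n)=1$ if $3\nmid n$. For an integer $x$ let $[x]_2$ be the largest power $2^k$ ($k\ge0$) dividing $x$, with $[0]_2=\infty$. Suppose that for every $n\ge 0$: (i) $[Q(3n)]_2\le 4[n(n+2)]_2$; (ii) $[Q(3n+1)]_2\le 2[n+1]_2$; (iii) $[Q(3n+2)]_2=1$; (iv) $[A(n)]_2\le (n+1)^2$. Then exactly two partial sums $A(m)/m!$ of the Taylor series $e=\sum_{r\ge0}1/r!$ are convergents of the simple continued fraction expansion of $e$.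
   Context: The convergents of $e$ are the rationals obtained by truncating the simple continued fraction $e=[2,1,2,1,1,4,1,1,6,1,1,8,\dots]$; their denominators are the $Q(n)$ above. A partial sum ''is a convergent'' if it equals one of these rationals. *)

(* Defs.v *)
From mathcomp Require Import all_boot all_order all_algebra.
Set Implicit Arguments. Unset Strict Implicit. Unset Printing Implicit Defensive.
Import Order.TTheory GRing.Theory Num.Theory.

(* A(n) = sum_{r=0}^n n!/r!  (each n!/r! is an exact integer division) *)
Definition A (n : nat) : nat := \sum_(r < n.+1) (n`! %/ r`!).

Definition b (n : nat) : nat := if 3 %| n then (2 * n) %/ 3 else 1.

(* QQ n = (Q n, Q n.+1) *)
Fixpoint QQ (n : nat) : nat * nat :=
  match n with
  | 0 => (0, 1)
  | k.+1 => let: (x, y) := QQ k in (y, b k.+2 * y + x)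
  end.
Definition Q (n : nat) : nat := (QQ n).1.

(* [x]_2 : largest power of 2 dividing x; None stands for infinity ([0]_2). *)
Definition pow2part (x : nat) : option nat :=
  if x == 0 then None else Some (2 ^ logn 2 x).

Definition scale_ext (c : nat) (a : option nat) : option nat :=
  match a with Some v => Some (c * v) | None => None end.

Definition le_ext (a b : option nat) : Prop :=
  match a, b with
  | _, None => True
  | None, Some _ => False
  | Some x, Some y => (x <= y)%N
  end.

(* partial quotients of e = [2; 1, 2, 1, 1, 4, 1, 1, 6, ...] *)
Definition e_pq (i : nat) : nat :=
  if i == 0 then 2 else if i %% 3 == 2 then (2 * (i + 1)) %/ 3 else 1.

Fixpoint cfrac (s : seq nat) : rat :=
  match s with
  | [::] => 0
  | [:: a] => a%:R
  | a :: s' => a%:R + (cfrac s')^-1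
  end%R.

Definition e_convergent (k : nat) : rat := cfrac (mkseq e_pq k.+1).

Definition partial_sum (m : nat) : rat := ((A m)%:R / (m`!)%:R)%R.

Definition is_e_convergent (q : rat) : Prop := exists k, q = e_convergent k.

Example Q_check : map Q (iota 0 7) = [:: 0; 1; 1; 3; 4; 7; 32]. Proof. by []. Qed.
Example A_check : A 3 = 16. Proof. by rewrite /A !big_ord_recr big_ord0. Qed.
Example pq_check : mkseq e_pq 9 = [:: 2; 1; 2; 1; 1; 4; 1; 1; 6]. Proof. by []. Qed.

(* Main.v *)
From Stdlib Require Import NArith List.
Require Import Defs.
From mathcomp Require Import all_boot all_order all_algebra.
From mathcomp Require Import zify ring.
Set Implicit Arguments. Unset Strict Implicit. Unset Printing Implicit Defensive.
Import Order.TTheory GRing.Theory Num.Theory.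

Lemma Q_rec n : Q n.+2 = b n.+2 * Q n.+1 + Q n.
Proof. rewrite /Q /=; by case: (QQ n). Qed.
Lemma Q1 : Q 1 = 1. Proof. by []. Qed.
Lemma Q0 : Q 0 = 0. Proof. by []. Qed.

Fixpoint PP (n : nat) : nat * nat :=
  match n with
  | 0 => (1, 2)
  | k.+1 => let: (x, y) := PP k in (y, b k.+2 * y + x)
  end.
Definition P n := (PP n).1.
Lemma P_rec n : P n.+2 = b n.+2 * P n.+1 + P n.
Proof. rewrite /P /=; by case: (PP n). Qed.

Lemma b_pos n : 0 < b n.+2.
Proof. rewrite /b; case: ifP => // /dvdnP [c Hc].
rewrite Hc mulnA mulnK //. by case: c Hc. Qed.

Lemma b_3 n : b (3 * n.+1) = 2 * n.+1.
Proof. by rewrite /b dvdn_mulr // mulnCA mulKn. Qed.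
Lemma b_3_1 n : b (3 * n + 1) = 1.
Proof. rewrite /b; case: ifP => // H. exfalso.
move: H; rewrite (dvdn_addr 1 (dvdn_mulr n (dvdnn 3))). by []. Qed.

Lemma e_pq_b k : e_pq k.+1 = b k.+2.
Proof. rewrite /e_pq /b /= addn1.
have -> : (k.+1 %% 3 == 2) = (3 %| k.+2) by apply/idP/idP => H; lia.
by [].
Qed.

Lemma Q_mono i j : i <= j -> Q i <= Q j.
Proof.
move=> /subnKC <-. elim: (j - i) => [|d IH]; first by rewrite addn0.
apply: (leq_trans IH). rewrite addnS.
case E: (i + d) => [|n]; first by rewrite Q0.
rewrite Q_rec. have := b_pos n. nia.
Qed.

Lemma Q_fact n : n.+1`! <= Q (3 * n + 1).
Proof.
elim: n => [|n IH]; first by [].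
have h1 := Q_rec (3 * n + 2). have h2 := Q_rec (3 * n + 1).
have e1 : (3 * n + 2).+2 = 3 * n.+1 + 1 by lia.
have e2 : (3 * n + 1).+2 = 3 * n.+1 by lia.
rewrite e1 b_3_1 in h1. rewrite e2 b_3 in h2.
have e3 : (3 * n + 2).+1 = 3 * n.+1 by lia.
have e4 : (3 * n + 1).+1 = 3 * n + 2 by lia.
rewrite e3 in h1. rewrite e4 in h2.
have m1 := Q_mono (leqnSn (3 * n + 1)). rewrite e4 in m1.
rewrite h1 h2 factS. nia.
Qed.

Lemma fact_dvd r m : r <= m -> r`! %| m`!.
Proof. move/subnKC<-; elim: (m - r) => [|d IH]; rewrite ?addn0 // addnS factS.
exact: dvdn_mull. Qed.

Lemma A_rec m : A m.+1 = m.+1 * A m + 1.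
Proof.
rewrite /A big_ord_recr /= divnn fact_gt0 big_distrr /=. congr (_ + _).
apply: eq_bigr => i _. rewrite factS muln_divA //. apply: fact_dvd.
by rewrite -ltnS.
Qed.

Lemma A_pos m : 0 < A m.
Proof. case: m => [|m]; first by rewrite /A big_ord1. rewrite A_rec. lia. Qed.

Lemma det j : (P j.+1 * Q j + 1 = P j * Q j.+1) \/ (P j * Q j.+1 + 1 = P j.+1 * Q j).
Proof.
elim: j => [|j IH]; first by left.
rewrite P_rec Q_rec. case: IH => H; [right|left]; nia.
Qed.

Lemma coprimePQ j : coprime (P j) (Q j).
Proof.
rewrite /coprime -dvdn1.
have g1 : gcdn (P j) (Q j) %| P j * Q j.+1 by apply: dvdn_mulr; apply: dvdn_gcdl.
have g2 : gcdn (P j) (Q j) %| P j.+1 * Q j by apply: dvdn_mull; apply: dvdn_gcdr.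
case: (det j) => H.
- by rewrite -H (dvdn_addr _ g2) in g1.
- by rewrite -H (dvdn_addr _ g1) in g2.
Qed.

Fixpoint fr (s : seq nat) : nat * nat * nat * nat :=
  match s with
  | [::] => (1, 0, 0, 1)
  | a :: s' => let: (p, pp, q, qq) := fr s' in (a * p + q, a * pp + qq, p, pp)
  end.

Lemma fr_rcons s a : fr (rcons s a) =
  let: (p, pp, q, qq) := fr s in (a * p + pp, p, a * q + qq, q).
Proof.
elim: s => [|x s IH] /=; first by rewrite !muln1 !muln0.
rewrite IH. case: (fr s) => [[[p pp] q] qq] /=. congr (_, _, _, _); ring.
Qed.

Lemma fr_e k : fr (mkseq e_pq k.+1) = (P k.+1, P k, Q k.+1, Q k).
Proof.
elim: k => [|k IH]; first by [].
rewrite mkseqS fr_rcons IH e_pq_b P_rec Q_rec. by [].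
Qed.

Lemma fr_pos s : all (fun x => 0 < x) s -> let: (p, pp, q, qq) := fr s in 0 < p.
Proof.
elim: s => [|x s IH] //= /andP [hx hs]. move: (IH hs).
case: (fr s) => [[[p pp] q] qq] /=. nia.
Qed.

Section RatA.
Local Open Scope ring_scope.
Lemma cfrac_fr s a : all (fun x => (0 < x)%N) s ->
  cfrac (a :: s) = let: (p, pp, q, qq) := fr (a :: s) in (p%:R / q%:R : rat).
Proof.
elim: s a => [|x s IH] a.
  by move=> _ /=; rewrite muln1 addn0 divr1.
move=> hs. have := fr_pos hs. move: hs => /= /andP [hx hs].
rewrite /= in IH *. rewrite (IH x hs). case: (fr s) => [[[p pp] q] qq] /= hp.
rewrite invf_div natrD natrM. field.
by rewrite -natrM -natrD pnatr_eq0 -lt0n.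
Qed.

End RatA.

Lemma e_pq_pos i : (0 < e_pq i)%N.
Proof. case: i => [|i]; first by []. rewrite e_pq_b. exact: b_pos. Qed.

Lemma Q_pos j : (0 < Q j.+1)%N.
Proof. have := Q_mono (isT : (1 <= j.+1)%N). by rewrite Q1. Qed.

Section RatB.
Local Open Scope ring_scope.
Lemma e_conv_eq k : e_convergent k = (P k.+1)%:R / (Q k.+1)%:R.
Proof.
rewrite /e_convergent.
have hall : all (fun x => (0 < x)%N) (mkseq e_pq k.+1).
  by apply/allP => x /mapP [i _ ->]; apply: e_pq_pos.
have := fr_e k. case E: (mkseq e_pq k.+1) hall => [|a s] //.
move=> hall2; have hs : all (fun x => (0 < x)%N) s by case/andP: hall2.
rewrite cfrac_fr // => ->. by [].
Qed.

End RatB.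
Lemma conv_iff m k : partial_sum m = e_convergent k <->
  (A m * Q k.+1 = P k.+1 * m`!)%N.
Proof.
rewrite e_conv_eq /partial_sum. split => [H|H].
- apply/eqP. rewrite -(eqr_nat rat) !natrM -eqr_div ?H //.
  by rewrite pnatr_eq0 -lt0n fact_gt0.
  by rewrite pnatr_eq0 -lt0n Q_pos.
- apply/eqP. rewrite eqr_div. by rewrite -!natrM H.
  by rewrite pnatr_eq0 -lt0n fact_gt0.
  by rewrite pnatr_eq0 -lt0n Q_pos.
Qed.

Fixpoint QQN (n : nat) : N * N :=
  match n with
  | 0 => (N.zero, N.one)
  | k.+1 => let: (x, y) := QQN k in (y, N.add (N.mul (N.of_nat (b k.+2)) y) x)
  end.
Fixpoint PPN (n : nat) : N * N :=
  match n with
  | 0 => (N.one, N.of_nat 2)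
  | k.+1 => let: (x, y) := PPN k in (y, N.add (N.mul (N.of_nat (b k.+2)) y) x)
  end.
Fixpoint AN (n : nat) : N :=
  match n with 0 => N.one | k.+1 => N.add (N.mul (N.of_nat k.+1) (AN k)) N.one end.
Fixpoint FN (n : nat) : N :=
  match n with 0 => N.one | k.+1 => N.mul (N.of_nat k.+1) (FN k) end.

Lemma QQN_ok k : QQN k = (N.of_nat (QQ k).1, N.of_nat (QQ k).2).
Proof. elim: k => [|k IH] //=. rewrite IH. case: (QQ k) => x y /=.
by rewrite Nat2N.inj_add Nat2N.inj_mul. Qed.
Lemma PPN_ok k : PPN k = (N.of_nat (PP k).1, N.of_nat (PP k).2).
Proof. elim: k => [|k IH] //=. rewrite IH. case: (PP k) => x y /=.
by rewrite Nat2N.inj_add Nat2N.inj_mul. Qed.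
Lemma AN_ok k : AN k = N.of_nat (A k).
Proof. elim: k => [|k IH]; first by rewrite /A big_ord1.
by rewrite A_rec /= IH Nat2N.inj_add Nat2N.inj_mul. Qed.
Lemma FN_ok k : FN k = N.of_nat (k`!).
Proof. elim: k => [|k IH] //. by rewrite factS /= IH Nat2N.inj_mul. Qed.

Definition chk : bool :=
  forallb (fun m => forallb (fun j =>
     negb (N.eqb (N.mul (AN m) (QQN j).1) (N.mul (PPN j).1 (FN m)))
     || (m == 1) || (m == 3)) (List.seq 1 (3 * m + 3))) (List.seq 0 50).

Lemma chk_true : chk = true.
Proof. vm_compute. reflexivity. Qed.

Lemma small_case m j : m < 50 -> 0 < j -> j <= 3 * m + 3 ->
  A m * Q j = P j * m`! -> m = 1 \/ m = 3.
Proof.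
move=> hm hj hjm E.
have := chk_true. rewrite /chk forallb_forall => /(_ m).
have hin : List.In m (List.seq 0 50) by apply/in_seq; lia.
move=> /(_ hin). rewrite forallb_forall => /(_ j).
have hin2 : List.In j (List.seq 1 (3 * m + 3)) by apply/in_seq; lia.
move=> /(_ hin2).
rewrite QQN_ok PPN_ok AN_ok FN_ok /= -!Nat2N.inj_mul.
have -> : (QQ j).1 = Q j by []. have -> : (PP j).1 = P j by [].
have E2 : (A m * Q j)%coq_nat = (P j * m`!)%coq_nat by exact: E.
rewrite E2 N.eqb_refl /=. case/orP => /eqP; auto.
Qed.

Lemma base25 : 4 * (2*25+2) ^ 3 * (2*25+4) < 2 ^ 25.
Proof. lia. Qed.
Lemma step_ineq t : 25 <= t -> (2*t+4) ^ 3 * (2*t+6) <= 2 * ((2*t+2) ^ 3 * (2*t+4)).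
Proof. move=> h. rewrite !expnS expn0 !muln1. nia. Qed.

Lemma pow_bound t : 25 <= t -> 4 * (2*t+2) ^ 3 * (2*t+4) < 2 ^ t.
Proof.
move=> /subnKC <-. elim: (t - 25) => [|d IH]; first by rewrite addn0 base25.
have hs := step_ineq (leq_addr d 25).
have -> : 25 + d.+1 = (25 + d).+1 by lia.
have -> : 2 ^ (25 + d).+1 = 2 * 2 ^ (25 + d) by rewrite expnS.
have -> : 2 * (25 + d).+1 + 2 = 2 * (25 + d) + 4 by lia.
have -> : 2 * (25 + d).+1 + 4 = 2 * (25 + d) + 6 by lia.
move: IH hs. move: (2 ^ (25 + d)) => X.
move: (2 * (25 + d)) => a.
move: ((a+4) ^ 3) ((a+2) ^ 3) => u v. nia.
Qed.

Lemma two_fact n : 2 ^ n %| (2 * n)`!.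
Proof.
elim: n => [|n IH] //.
have -> : 2 * n.+1 = (2 * n).+2 by lia.
rewrite !factS mulnA expnS. apply: dvdn_mul => //.
apply: dvdn_mulr. have -> : (2 * n).+2 = 2 * n.+1 by lia. exact: dvdn_mulr.
Qed.

Lemma pow2part_pos x : 0 < x -> pow2part x = Some (2 ^ logn 2 x).
Proof. by case: x. Qed.

Lemma pow_logn_le x : 0 < x -> 2 ^ logn 2 x <= x.
Proof. move=> hx; apply: dvdn_leq => //; exact: pfactor_dvdnn. Qed.

Lemma Qval m j :
  (forall n : nat,
     le_ext (pow2part (Q (3 * n))) (scale_ext 4 (pow2part (n * (n + 2))))) ->
  (forall n : nat,
     le_ext (pow2part (Q (3 * n + 1))) (scale_ext 2 (pow2part (n + 1)))) ->
  (forall n : nat, pow2part (Q (3 * n + 2)) = Some 1) ->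
  0 < j -> j <= 3 * m + 3 -> 2 ^ logn 2 (Q j) <= 4 * (m + 1) * (m + 3).
Proof.
move=> H1 H2 H3 hj hjm.
have hQ : 0 < Q j by case: j hj hjm => // j _ _; apply: Q_pos.
have Ej := divn_eq j 3. have hr := ltn_pmod j (isT : 0 < 3).
move: Ej hr. move: (j %/ 3) (j %% 3) => n r Ej hr.
case: r Ej hr => [|[|[|r]]] Ej hr //.
- have E3 : j = 3 * n by lia. have hn : 0 < n * (n + 2) by nia.
  have := H1 n. rewrite -E3 (pow2part_pos hQ) (pow2part_pos hn) /=.
  have := pow_logn_le hn. nia.
- have E3 : j = 3 * n + 1 by lia. have hn : 0 < n + 1 by lia.
  have := H2 n. rewrite -E3 (pow2part_pos hQ) (pow2part_pos hn) /=.
  have := pow_logn_le hn. nia.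
- have E3 : j = 3 * n + 2 by lia.
  have := H3 n. rewrite -E3 (pow2part_pos hQ) => [[->]]. nia.
Qed.

Lemma large m j :
  (forall n : nat,
     le_ext (pow2part (Q (3 * n))) (scale_ext 4 (pow2part (n * (n + 2))))) ->
  (forall n : nat,
     le_ext (pow2part (Q (3 * n + 1))) (scale_ext 2 (pow2part (n + 1)))) ->
  (forall n : nat, pow2part (Q (3 * n + 2)) = Some 1) ->
  (forall n : nat, le_ext (pow2part (A n)) (Some ((n + 1) ^ 2))) ->
  50 <= m -> 0 < j -> j <= 3 * m + 3 -> A m * Q j = P j * m`! -> False.
Proof.
move=> H1 H2 H3 H4 hm hj hjm E.
have hQ : 0 < Q j by case: j hj hjm E => // j _ _ _; apply: Q_pos.
have hA := A_pos m. have hF := fact_gt0 m.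
have hP : 0 < P j by move: E; case: (P j) => //; rewrite mul0n; nia.
have hv : logn 2 (m`!) <= logn 2 (A m) + logn 2 (Q j).
  by rewrite -lognM // E lognM // leq_addl.
have hQv := Qval H1 H2 H3 hj hjm.
have hAv := H4 m. rewrite (pow2part_pos hA) /= in hAv.
have hf : (m./2) <= logn 2 (m`!).
  rewrite -pfactor_dvdn //. apply: dvdn_trans (two_fact _) _.
  apply: fact_dvd. rewrite -divn2. lia.
have h2 : 2 ^ (m./2) <= 2 ^ logn 2 (A m) * 2 ^ logn 2 (Q j).
  by rewrite -expnD leq_pexp2l //; exact: leq_trans hf hv.
have hpb := pow_bound (t := m./2) _.
have hm2 : 25 <= m./2 by rewrite -divn2; lia.
have := hpb hm2.
have : m + 1 <= 2 * m./2 + 2 by rewrite -divn2; lia.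
move: (2 ^ m./2) h2 => X h2. move: (2 * m./2) => y hy.
move: (2 ^ logn 2 (A m)) (2 ^ logn 2 (Q j)) hAv hQv h2 => a q ha hq hX.
have h4 : (m + 1) ^ 2 <= (y + 2) ^ 2 by rewrite leq_exp2r.
have h5 : 4 * (m + 1) * (m + 3) <= 4 * (y + 2) * (y + 4) by nia.
have h6 : a * q <= (y + 2) ^ 2 * (4 * (y + 2) * (y + 4)).
  apply: leq_mul; [exact: leq_trans ha h4 | exact: leq_trans hq h5].
rewrite !expnS expn0 !muln1 in h6 *. nia.
Qed.

Theorem theoremA4 :
  (forall n : nat,
     le_ext (pow2part (Q (3 * n))) (scale_ext 4 (pow2part (n * (n + 2))))) ->
  (forall n : nat,
     le_ext (pow2part (Q (3 * n + 1))) (scale_ext 2 (pow2part (n + 1)))) ->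
  (forall n : nat, pow2part (Q (3 * n + 2)) = Some 1) ->
  (forall n : nat, le_ext (pow2part (A n)) (Some ((n + 1) ^ 2))) ->
  exists m1 m2 : nat,
    m1 <> m2 /\
    (forall m : nat, is_e_convergent (partial_sum m) <-> (m = m1 \/ m = m2)).
Proof.
move=> H1 H2 H3 H4. exists 1, 3. split => // m. split.
- case=> k /conv_iff E.
  have hc : coprime (Q k.+1) (P k.+1) by rewrite coprime_sym coprimePQ.
  have hd : Q k.+1 %| m`!.
    rewrite -(Gauss_dvdr (m`!) hc) -E. exact: dvdn_mull.
  have hle : Q k.+1 <= m`! by apply: dvdn_leq => //; exact: fact_gt0.
  have hj : k.+1 <= 3 * m + 3.
    rewrite leqNgt; apply/negP => hlt.
    have h1 : 3 * m.+1 + 1 <= k.+1 by lia.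
    have := leq_trans (Q_fact m.+1) (Q_mono h1).
    rewrite !factS. have := fact_gt0 m. nia.
  have [hm|hm] := ltnP m 50.
  + exact: (small_case hm _ hj E).
  + exfalso. exact: (large H1 H2 H3 H4 hm _ hj E).
- case=> ->.
  + exists 0. apply/conv_iff. by rewrite A_rec /A big_ord1.
  + exists 2. apply/conv_iff. by rewrite A_check.
Qed.
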